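(* Let $\mathbb{A}$ be a non-empty set and $\varphi:\mathbb{A}^+\to C$ a finite coloring. Then every periodic word $x=u^\omega$ with $u\in\mathbb{A}^+$ admits a shift invariant $\varphi$-ultra monochromatic factorization.
   Context: $T$ is the shift, $T(x_0x_1\cdots)=x_1x_2\cdots$. A factorization $z=V_0V_1V_2\cdots$ with all $V_i\in\mathbb{A}^+$ is $\varphi$-ultra monochromatic if there is $c\in C$ such that for all $k\ge1$, all $0\le n_1<\cdots<n_k$ and all permutations $\sigma$ of $\{1,\dots,k\}$, $\varphi(V_{n_{\sigma(1)}}\cdots V_{n_{\sigma(k)}})=c$. It is shift invariant if for every positive integer $j$ the induced factorization $T^j(z)=W_0W_1W_2\cdots$ with $|W_i|=|V_i|$ for all $i$ is also $\varphi$-ultra monochromatic (the color may depend on $j$). *)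

(* Defs.v *)
From mathcomp Require Import all_boot.
Set Implicit Arguments. Unset Strict Implicit. Unset Printing Implicit Defensive.

(* Infinite words over A are functions nat -> A; finite words are seq A;
   A^+ = nonempty seq A. *)

Definition shift (A : Type) (z : nat -> A) : nat -> A := fun i => z i.+1.

(* the periodic word u^omega (u nonempty; the default a0 is then irrelevant) *)
Definition omega (A : Type) (a0 : A) (u : seq A) : nat -> A :=
  fun i => nth a0 u (i %% size u).

Definition factor (A : Type) (z : nat -> A) (s l : nat) : seq A :=
  mkseq (fun k => z (s + k)) l.

Definition start (A : Type) (V : nat -> seq A) (n : nat) : nat :=
  \sum_(i < n) size (V i).

Definition is_factorization (A : Type) (z : nat -> A) (V : nat -> seq A) : Prop :=
  (forall i, 0 < size (V i)) /\
  (forall i, V i = factor z (start V i) (size (V i))).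

(* phi-ultra monochromatic: for all k >= 1, n_1 < ... < n_k (the list ns),
   and every permutation (the list ms, a rearrangement of ns),
   phi (V_{n_sigma(1)} ... V_{n_sigma(k)}) = c. *)
Definition ultra_mono (A : Type) (C : finType) (phi : seq A -> C)
    (V : nat -> seq A) : Prop :=
  exists c : C, forall ns ms : seq nat,
    ns != [::] -> sorted ltn ns -> perm_eq ms ns ->
    phi (flatten (map V ms)) = c.

Definition induced (A : Type) (z : nat -> A) (V : nat -> seq A) (j : nat) :
    nat -> seq A :=
  fun i => factor (iter j (@shift A) z) (start V i) (size (V i)).

Definition shift_inv_ultra_mono (A : Type) (C : finType) (phi : seq A -> C)
    (z : nat -> A) (V : nat -> seq A) : Prop :=
  is_factorization z V /\ ultra_mono phi V /\
  (forall j, 0 < j -> ultra_mono phi (induced z V j)).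

(* Main.v *)
From mathcomp Require Import all_boot.
From mathcomp Require Import boolp classical_sets filter.
Require Import Defs.
Set Implicit Arguments. Unset Strict Implicit. Unset Printing Implicit Defensive.
Local Open Scope classical_set_scope.


Definition shiftS (A : set nat) (x : nat) : set nat := fun y => A (x + y).
Definition psum (p q : set (set nat)) : set (set nat) :=
  fun A => p (fun x => q (shiftS A x)).

Record UF (p : set (set nat)) : Prop := {
  ufT : p setT;
  ufI : forall A B, p A -> p B -> p (A `&` B);
  ufS : forall A B, A `<=` B -> p A -> p B;
  uf0 : ~ p set0;
  ufC : forall A, p A \/ p (~` A) }.

Definition Fre : set (set nat) := fun A => exists N, forall n, (N <= n)%N -> A n.

Lemma UF_neg p A : UF p -> p A -> ~ p (~` A).
Proof.
move=> hp hA hC; apply: (uf0 hp); apply: (ufS hp _ (ufI hp hA hC)).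
by move=> x [].
Qed.

Lemma psum_UF p q : UF p -> UF q -> UF (psum p q).
Proof.
move=> hp hq; split.
- apply: (ufS hp _ (ufT hp)) => x _; exact: (ufS hq _ (ufT hq)).
- move=> A B hA hB; apply: (ufS hp _ (ufI hp hA hB)) => x [h1 h2].
  exact: (ufI hq h1 h2).
- move=> A B hAB hA; apply: (ufS hp _ hA) => x; apply: (ufS hq) => y; exact: hAB.
- move=> h0; apply: (uf0 hp); apply: (ufS hp _ h0) => x /=.
  move=> h; apply: (uf0 hq); apply: (ufS hq _ h) => y [].
- move=> A; case: (ufC hp (fun x => q (shiftS A x))) => h; [left|right] => //.
  apply: (ufS hp _ h) => x /= hx.
  case: (ufC hq (shiftS A x)) => // h'.
Qed.

Lemma psumA p q r : psum (psum p q) r = psum p (psum q r).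
Proof.
apply: funext => A; rewrite /psum; congr (p _); apply: funext => y.
congr (q _); apply: funext => z; congr r; apply: funext => w.
by rewrite /shiftS addnA.
Qed.

Lemma fre_sum p q : UF p -> Fre `<=` q -> Fre `<=` psum p q.
Proof.
move=> hp hq A [N hN]; apply: (ufS hp _ (ufT hp)) => x _; apply: hq.
by exists N => n hn; apply: hN; apply: leq_trans hn (leq_addl _ _).
Qed.

Record good (G : set (set nat)) : Prop := {
  gI : forall A B, G A -> G B -> G (A `&` B);
  gS : forall A B, A `<=` B -> G A -> G B;
  g0 : ~ G set0;
  gF : Fre `<=` G;
  gsum : forall p q, UF p -> UF q -> G `<=` p -> G `<=` q -> G `<=` psum p q }.

Lemma gT G : good G -> G setT.
Proof. by move=> hG; apply: (gF hG); exists 0. Qed.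

Lemma Fre_good : good Fre.
Proof.
split.
- move=> A B [N1 h1] [N2 h2]; exists (maxn N1 N2) => n hn; split.
  + by apply: h1; apply: leq_trans hn; rewrite leq_maxl.
  + by apply: h2; apply: leq_trans hn; rewrite leq_maxr.
- by move=> A B hAB [N h]; exists N => n /h /hAB.
- by move=> [N h]; apply: (h N).
- by [].
- move=> p q hp hq _ hq'; exact: fre_sum.
Qed.

Lemma ext_uf G : G setT -> (forall A B, G A -> G B -> G (A `&` B)) ->
  (forall A B, A `<=` B -> G A -> G B) -> ~ G set0 ->
  exists p, UF p /\ G `<=` p.
Proof.
move=> hT hI hS h0.
have FF : Filter G by split.
have PF : ProperFilter G by split.
have [p [Up sGp]] := ultraFilterLemma PF.
exists p; split => //; split.
- exact: filterT.
- exact: filterI.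
- exact: filterS.
- exact: filter_not_empty.
- move=> A; exact: in_ultra_setVsetC.
Qed.

Lemma exists_max_good : exists M, good M /\
  forall G, good G -> M `<=` G -> G `<=` M.
Proof.
pose P := fun G : set (set nat) => (forall A, ~ G A) \/ good G.
have Pne G A : P G -> G A -> good G by case=> // h /h.
have [|M [PM Mmax]] := @Zorn_bigcup _ P.
  move=> F FP Ftot.
  have [[X FX] gX|nog] := pselect (exists2 X, F X & good X); last first.
    left => A [X FX XA]; apply: nog; exists X => //; exact: (Pne X A (FP X FX) XA).
  right; split.
  - move=> A B [X1 F1 A1] [X2 F2 B2].
    case: (Ftot _ _ F1 F2) => s.
    + exists X2 => //; exact: (gI (Pne _ _ (FP _ F2) B2) (s _ A1) B2).
    + exists X1 => //; exact: (gI (Pne _ _ (FP _ F1) A1) A1 (s _ B2)).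
  - move=> A B hAB [X1 F1 A1]; exists X1 => //.
    exact: (gS (Pne _ _ (FP _ F1) A1) hAB A1).
  - move=> [X1 F1 A1]; exact: (g0 (Pne _ _ (FP _ F1) A1) A1).
  - move=> A hA; exists X => //; exact: (gF gX).
  - move=> p q hp hq sp sq A [X1 F1 A1].
    have gX1 := Pne _ _ (FP _ F1) A1.
    apply: (gsum gX1 hp hq _ _ A1).
    + by move=> B hB; apply: sp; exists X1.
    + by move=> B hB; apply: sq; exists X1.
have gM : good M.
  case: PM => // hM; exfalso.
  apply: (Mmax Fre); last by right; exact: Fre_good.
  split; first by move=> A /hM.
  move=> h; apply: (hM setT); apply: h; exists 0 => //.
exists M; split => // G gG sMG A GA; apply: contrapT => nMA.
apply: (Mmax G); last by right.
by split => // h; apply: nMA; apply: h.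
Qed.

Lemma UF_eq p q : UF p -> UF q -> q `<=` p -> p = q.
Proof.
move=> hp hq s; apply: funext => A; apply: propext; split => [hA|/s //].
case: (ufC hq A) => // hc; exfalso; exact: (UF_neg hp hA (s _ hc)).
Qed.

Lemma exists_idem : exists p, UF p /\ Fre `<=` p /\ psum p p = p.
Proof.
have [M [gM Mmax]] := exists_max_good.
pose K := fun p => UF p /\ M `<=` p.
have Ksum p q : K p -> K q -> K (psum p q).
  move=> [hp sp] [hq sq]; split; first exact: psum_UF.
  exact: (gsum gM hp hq sp sq).
have [x [Ux sMx]] := ext_uf (gT gM) (gI gM) (gS gM) (g0 gM).
have Kx : K x by [].
pose G1 := fun A => forall p, K p -> psum p x A.
have L1 q : UF q -> G1 `<=` q -> exists2 p, K p & psum p x = q.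
  move=> hq sq.
  pose H := fun S => exists2 Ms, M Ms &
     exists2 A, q A & (Ms `&` (fun n => x (shiftS A n))) `<=` S.
  have [p [hp sHp]] : exists p, UF p /\ H `<=` p.
    apply: ext_uf.
    - exists setT; first exact: (gT gM).
      by exists setT; [exact: (ufT hq)|].
    - move=> A B [M1 hM1 [A1 qA1 s1]] [M2 hM2 [A2 qA2 s2]].
      exists (M1 `&` M2); first exact: (gI gM hM1 hM2).
      exists (A1 `&` A2); first exact: (ufI hq qA1 qA2).
      move=> n [[m1 m2] hx]; split.
      + apply: s1; split => //; apply: (ufS Ux _ hx) => y []. done.
      + apply: s2; split => //; apply: (ufS Ux _ hx) => y []. done.
    - move=> A B hAB [M1 hM1 [A1 qA1 s1]]; exists M1 => //; exists A1 => //.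
      by move=> n /s1 /hAB.
    - move=> [M1 hM1 [A1 qA1 s1]].
      have hC : M (~` (fun n => x (shiftS A1 n))).
        apply: (gS gM _ hM1) => n m1 hx; exact: (s1 n (conj m1 hx)).
      have : G1 (~` A1).
        move=> p [hp sMp]; have pC := sMp _ hC.
        case: (ufC (psum_UF hp Ux) A1) => // h; exfalso.
        exact: (UF_neg hp h pC).
      move=> /sq; exact: (UF_neg hq qA1).
  have sMp : M `<=` p.
    move=> A hA; apply: sHp; exists A => //; exists setT; first exact: (ufT hq).
    by move=> n [].
  exists p; first by [].
  apply: UF_eq => //; first exact: psum_UF.
  move=> A qA; apply: sHp; exists setT; first exact: (gT gM).
  by exists A => // n [].
have G1good : good G1.
  split.
  - move=> A B hA hB p Kp; exact: (ufI (psum_UF Kp.1 Ux) (hA p Kp) (hB p Kp)).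
  - move=> A B hAB hA p Kp; exact: (ufS (psum_UF Kp.1 Ux) hAB (hA p Kp)).
  - move=> h; exact: (uf0 (psum_UF Ux Ux) (h x Kx)).
  - move=> A hA p Kp; apply: (fre_sum Kp.1 _ hA).
    by move=> B hB; apply: sMx; apply: (gF gM).
  - move=> q1 q2 h1 h2 s1 s2 A hA.
    have [p1 K1 e1] := L1 q1 h1 s1.
    have [p2 K2 e2] := L1 q2 h2 s2.
    rewrite -e1 -e2 -psumA.
    apply: hA; apply: (Ksum) => //; exact: (Ksum).
have sMG1 : M `<=` G1 by move=> A hA p Kp; exact: (Ksum p x Kp Kx).2.
have sG1x : G1 `<=` x by move=> A /(Mmax _ G1good sMG1) /sMx.
have [y Ky eyx] := L1 x Ux sG1x.
pose G2 := fun A => forall y, K y -> psum y x = x -> y A.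
have sMG2 : M `<=` G2 by move=> A hA z [_ sz] _; apply: sz.
have L2 q : UF q -> G2 `<=` q -> K q /\ psum q x = x.
  move=> hq sq; have Kq : K q by split => // A /sMG2 /sq.
  split => //; apply: UF_eq => //; first exact: psum_UF.
  move=> A xA; apply: contrapT => nA.
  have h : psum q x (~` A) by case: (ufC (psum_UF hq Ux) A).
  have hC : G2 (~` (fun n => x (shiftS (~` A) n))).
    move=> z Kz ez; case: (ufC Kz.1 (fun n => x (shiftS (~` A) n))) => // h'.
    exfalso; apply: (UF_neg Ux xA); move: h'; rewrite -/(psum z x (~` A)) ez //.
  exact: (UF_neg hq h (sq _ hC)).
have G2good : good G2.
  split.
  - move=> A B hA hB z Kz ez; exact: (ufI Kz.1 (hA z Kz ez) (hB z Kz ez)).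
  - move=> A B hAB hA z Kz ez; exact: (ufS Kz.1 hAB (hA z Kz ez)).
  - move=> h; exact: (uf0 Ky.1 (h y Ky eyx)).
  - move=> A hA z Kz _; exact: (Kz.2 _ (gF gM hA)).
  - move=> q1 q2 h1 h2 s1 s2 A hA.
    have [K1 e1] := L2 q1 h1 s1.
    have [K2 e2] := L2 q2 h2 s2.
    apply: hA; first exact: (Ksum _ _ K1 K2).
    by rewrite psumA e2 e1.
have sG2x : G2 `<=` x by move=> A /(Mmax _ G2good sMG2) /sMx.
have [_ exx] := L2 x Ux sG2x.
exists x; split => //; split => //.
by move=> A /(gF gM) /sMx.
Qed.

Section Hind.
Variable p : set (set nat).
Hypothesis hp : UF p.
Hypothesis hF : Fre `<=` p.
Hypothesis hid : psum p p = p.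

Definition star (A : set nat) : set nat := fun n => A n /\ p (shiftS A n).

Lemma star_in A : p A -> p (star A).
Proof.
move=> hA; have h2 : psum p p A by rewrite hid.
exact: (ufI hp hA h2).
Qed.

Lemma star_shift A n : star A n -> p (shiftS (star A) n).
Proof.
move=> [_ h]; apply: (ufS hp _ (star_in h)) => y [h1 h2]; split => //.
move: h2; congr p; apply: funext => w; by rewrite /shiftS addnA.
Qed.

Lemma p_pos A : p A -> exists n, 0 < n /\ A n.
Proof.
move=> hA; apply: contrapT => hn.
have h1 : p (fun n => 0 < n) by apply: hF; exists 1.
apply: (uf0 hp); apply: (ufS hp _ (ufI hp hA h1)) => n [a b]; apply: hn.
by exists n.
Qed.

Definition pickpos (A : set nat) : nat := xget 0 (fun n => 0 < n /\ A n).

Lemma pickposP A : p A -> 0 < pickpos A /\ A (pickpos A).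
Proof. move=> hA; exact: (xgetPex 0 (p_pos hA)). Qed.

Fixpoint Cs (A : set nat) (i : nat) : set nat :=
  match i with
  | 0 => A
  | i.+1 => let B := star (Cs A i) in B `&` shiftS B (pickpos B)
  end.

Definition Bs A i := star (Cs A i).
Definition xs A i := pickpos (Bs A i).

Lemma Cs_in A i : p A -> p (Cs A i).
Proof.
move=> hA; elim: i => [//|i IH] /=.
have hB := star_in IH.
have [_ hx] := pickposP hB.
exact: (ufI hp hB (star_shift hx)).
Qed.

Lemma xsP A i : p A -> 0 < xs A i /\ Bs A i (xs A i).
Proof. move=> hA; exact: (pickposP (star_in (Cs_in i hA))). Qed.

Lemma Bs_step A i : Bs A i.+1 `<=` Bs A i `&` shiftS (Bs A i) (xs A i).
Proof. by move=> n [h _]. Qed.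

Lemma Bs_mono A i j : i <= j -> Bs A j `<=` Bs A i.
Proof.
move/subnK => <-; elim: (j - i) => [//|k IH] n /Bs_step [h _].
exact: IH.
Qed.

Lemma Bs_sums A i ns : p A -> sorted ltn (i :: ns) ->
  Bs A i (sumn (map (xs A) (i :: ns))).
Proof.
move=> hA; elim: ns i => [|j ns IH] i /=.
  by rewrite addn0 => _; case: (xsP i hA).
move=> /andP [lij hs].
have := IH j hs => /= /(Bs_mono lij) /Bs_step [_].
done.
Qed.

End Hind.

Lemma hindman (p : set (set nat)) A : UF p -> Fre `<=` p -> psum p p = p ->
  p A -> exists m : nat -> nat, (forall i, 0 < m i) /\
  forall ns, ns != [::] -> sorted ltn ns -> A (sumn (map m ns)).
Proof.
move=> hp hF hid hA; exists (xs p A); split.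
  by move=> i; case: (xsP hp hF hid i hA).
case=> [//|i ns] _ hs.
have h := Bs_sums hp hF hid hA hs.
exact: (Bs_mono (leq0n i) h).1.
Qed.

Section Words.
Variables (A : Type) (a0 : A) (u : seq A).

Definition word (j L : nat) : seq A :=
  mkseq (fun k => nth a0 u ((j + k) %% size u)) L.

Lemma mod_shift j s k : size u %| s -> (j + (s + k)) %% size u = (j + k) %% size u.
Proof. by case/dvdnP => c ->; rewrite addnCA modnMDl. Qed.

Lemma word_cat j L1 L2 : size u %| L1 -> word j L1 ++ word j L2 = word j (L1 + L2).
Proof.
move=> hd; rewrite /word /mkseq iotaD map_cat add0n; congr (_ ++ _).
rewrite -{1}(addn0 L1) iotaDl -map_comp; apply: eq_map => k /=.
by rewrite mod_shift.
Qed.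

Lemma flat_word j (m : nat -> nat) ms :
  flatten (map (fun i => word j (m i * size u)) ms) = word j (sumn (map m ms) * size u).
Proof.
elim: ms => [|i ms IH] /=; first by rewrite /word mul0n.
by rewrite IH word_cat ?dvdn_mull // mulnDl.
Qed.

Lemma word_mod j L : word (j %% size u) L = word j L.
Proof. by apply: eq_mkseq => k; rewrite modnDml. Qed.

End Words.

Lemma iter_shift (A : Type) j (z : nat -> A) n : iter j (@shift A) z n = z (j + n).
Proof.
elim: j n => [//|j IH] n /=; by rewrite /shift IH addnS addSn.
Qed.


Lemma color_class (p : set (set nat)) (D : finType) (col : nat -> D) :
  UF p -> exists d, p (fun n => col n = d).
Proof.
move=> hp; apply: contrapT => hn.
have h (s : seq D) : p (fun n => col n \notin s).
  elim: s => [|d s IH]; first exact: (ufS hp _ (ufT hp)).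
  have hd : p (~` (fun n => col n = d)).
    case: (ufC hp (fun n => col n = d)) => // h; exfalso; apply: hn; by exists d.
  apply: (ufS hp _ (ufI hp hd IH)) => n [h1 h2].
  by rewrite in_cons negb_or h2 andbT; apply/eqP.
apply: (uf0 hp); apply: (ufS hp _ (h (enum D))) => n.
by rewrite mem_enum.
Qed.

Local Close Scope classical_set_scope.
Theorem theorem3p5 (A : Type) (a0 : A) (C : finType) (phi : seq A -> C)
    (u : seq A) (hu : 0 < size u) :
  exists V : nat -> seq A, shift_inv_ultra_mono phi (omega a0 u) V.
Proof.
have [p [hp [hF hid]]] := exists_idem.
pose P := size u.
pose col := fun n : nat => [ffun jo : 'I_P => phi (word a0 u jo (n * P))].
have [d hd] := color_class col hp.
have [m [mpos hm]] := hindman hp hF hid hd.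
have UM j : ultra_mono phi (fun i => word a0 u j (m i * P)).
  exists (d (Ordinal (ltn_pmod j hu))) => ns ms hne hs hperm.
  rewrite flat_word (perm_sumn (perm_map m hperm)).
  have := hm ns hne hs; rewrite /col => <-; rewrite ffunE /=.
  by rewrite word_mod.
pose V := fun i => word a0 u 0 (m i * P).
have dstart i : P %| start V i.
  rewrite /start; apply: dvdn_sum => i' _; by rewrite size_mkseq dvdn_mull.
have indE j : induced (omega a0 u) V j = (fun i => word a0 u j (m i * P)).
  apply: funext => i; rewrite /induced /factor /V size_mkseq.
  apply: eq_mkseq => k; rewrite iter_shift /omega.
  by rewrite mod_shift.
exists V; split; [split|split].
- by move=> i; rewrite size_mkseq muln_gt0 mpos.
- move=> i; have := indE 0; rewrite /induced /= => e.
  by have := congr1 (fun f => f i) e => /= ->.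
- exact: UM.
- by move=> j _; rewrite indE.
Qed.
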